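(* Assume that the GAFS sequence satisfies $x_k\to x^*$ and $c^Tx_k>c^Tx^*$ for all $k\ge 0$. Define $u_k=\frac{X_ks_k}{c^Tx_k-c^Tx^*}$, $r_k=\frac{\gamma_k}{c^Tx_k-c^Tx^*}$ and $p_k=\gamma_kX_k^{-1}e$, where $e=(1,\dots,1)^T$. Then for all $k\ge 0$: $$\frac{c^Tx_{k+1}-c^Tx^*}{c^Tx_k-c^Tx^*}=1-\alpha\sum_{j=0}^{k}\frac{\|u_j\|^2}{\gamma(u_j)}\frac{r_k}{r_j},$$ and for every coordinate $j=1,\dots,n$, $$\frac{(x_{k+1})_j}{(x_k)_j}=1-\alpha\sum_{i=0}^{k}\frac{(u_i)_j}{\gamma(u_i)}\frac{(p_k)_j}{(p_i)_j}.$$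
   Context: Let $A\in\mathbb{R}^{m\times n}$ have rank $m$, $b\in\mathbb{R}^m$, $c\in\mathbb{R}^n$. Primal LP: $\min c^Tx$ s.t. $Ax=b$, $x\ge 0$; dual LP: $\max b^Ty$ s.t. $A^Ty+s=c$, $s\ge 0$. Standing assumptions: the primal has a strictly positive feasible point; $c^Tx$ is not constant on the primal feasible region; the LP has an optimal solution. For $u\in\mathbb{R}^n$, $\gamma(u)=\max\{u_i: u_i>0\}$; $\|\cdot\|$ is the Euclidean norm. For $x>0$, $X=\mathrm{diag}(x)$. GAFS sequence: fix $\alpha\in(0,1)$, $\beta\in[0,1)$, and $x_0>0$ with $Ax_0=b$. For $k\ge0$ let $X_k=\mathrm{diag}(x_k)$, $y_k=(AX_k^2A^T)^{-1}AX_k^2c$, $s_k=c-A^Ty_k$. Set $x_1=x_0-\alpha\frac{X_0^2s_0}{\gamma(X_0s_0)}$ and, for $k\ge1$, $x_{k+1}=x_k-\alpha\frac{X_k^2s_k}{\gamma(X_ks_k)}+\beta\frac{x_k-x_{k-1}}{\|X_k^{-1}(x_k-x_{k-1})\|_\infty}$ (it is assumed all quantities are well defined, i.e. $X_ks_k$ has a positive entry and $x_k\ne x_{k-1}$). Write $\delta(x_k)=x_k-x_{k-1}$, $\alpha_k=\alpha/\gamma(X_ks_k)$, $\beta_k=\beta/\|X_k^{-1}\delta(x_k)\|_\infty$ ($k\ge1$), $\gamma_0=1$, $\gamma_k=\prod_{j=1}^k\beta_j$. *)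

(* Defs.v *)
(* the claim is an algebraic identity over an ordered field;
   we state it for an arbitrary realFieldType R (which includes the reals). *)
From HB Require Import structures.
From mathcomp Require Import all_boot all_order all_algebra.
Set Implicit Arguments. Unset Strict Implicit. Unset Printing Implicit Defensive.
Import Order.TTheory GRing.Theory Num.Theory.
Local Open Scope ring_scope.

Section GAFSDefs.
Variable R : realFieldType.

Definition dotv n (c x : 'cV[R]_n) : R := \sum_i c i 0 * x i 0.

Definition sqnorm n (u : 'cV[R]_n) : R := \sum_i (u i 0) ^+ 2.

Definition ninf n (u : 'cV[R]_n) : R := \big[Num.max/0]_i `|u i 0|.

Definition gam n (u : 'cV[R]_n) : R := \big[Num.max/0]_(i | 0 < u i 0) u i 0.

Definition Xm n (x : 'cV[R]_n) : 'M[R]_n := diag_mx (x^T).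

Definition onev n : 'cV[R]_n := const_mx 1.

Definition yv m n (A : 'M[R]_(m, n)) (c x : 'cV[R]_n) : 'cV[R]_m :=
  invmx (A *m Xm x *m Xm x *m A^T) *m (A *m Xm x *m Xm x *m c).

Definition sv m n (A : 'M[R]_(m, n)) (c x : 'cV[R]_n) : 'cV[R]_n :=
  c - A^T *m yv A c x.

Definition is_GAFS m n (A : 'M[R]_(m, n)) (c : 'cV[R]_n) (alpha beta : R)
    (x : nat -> 'cV[R]_n) : Prop :=
  x 1%N = x 0%N - (alpha / gam (Xm (x 0%N) *m sv A c (x 0%N)))
                   *: (Xm (x 0%N) *m Xm (x 0%N) *m sv A c (x 0%N)) /\
  forall k : nat,
    x k.+2 = x k.+1
      - (alpha / gam (Xm (x k.+1) *m sv A c (x k.+1)))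
          *: (Xm (x k.+1) *m Xm (x k.+1) *m sv A c (x k.+1))
      + (beta / ninf (invmx (Xm (x k.+1)) *m (x k.+1 - x k)))
          *: (x k.+1 - x k).

(* beta_k = beta / ||X_k^{-1} delta(x_k)||_inf  (used for k >= 1) *)
Definition betak n (beta : R) (x : nat -> 'cV[R]_n) (k : nat) : R :=
  beta / ninf (invmx (Xm (x k)) *m (x k - x k.-1)).

Definition gammak n (beta : R) (x : nat -> 'cV[R]_n) (k : nat) : R :=
  \prod_(1 <= j < k.+1) betak beta x j.

End GAFSDefs.

(* Main.v *)
Require Import Defs.
From HB Require Import structures.
From mathcomp Require Import all_boot all_order all_algebra.
From mathcomp Require Import ring lra.
Import Order.TTheory GRing.Theory Num.Theory.
Local Open Scope ring_scope.

Section H.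
Variable R : realFieldType.

Lemma XmE n (x v : 'cV[R]_n) i : (Xm x *m v) i 0 = x i 0 * v i 0.
Proof. by rewrite /Xm mul_diag_mx !mxE. Qed.

Lemma Xm_unit n (x : 'cV[R]_n) : (forall i, 0 < x i 0) -> Xm x \in unitmx.
Proof.
move=> hx; rewrite unitmxE det_diag unitfE; apply/prodf_neq0 => i _.
by rewrite mxE gt_eqF.
Qed.

Lemma M_unit m n (A : 'M[R]_(m, n)) (x : 'cV[R]_n) :
  \rank A = m -> (forall i, 0 < x i 0) ->
  A *m Xm x *m Xm x *m A^T \in unitmx.
Proof.
move=> hr hx; rewrite -row_free_unit; apply: inj_row_free => v hv.
have hw : v *m (A *m Xm x) = 0.
  set w := v *m (A *m Xm x).
  have h0 : (w *m w^T) 0 0 = 0.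
    have -> : w *m w^T = v *m (A *m Xm x *m Xm x *m A^T) *m v^T.
      by rewrite /w trmx_mul trmx_mul /Xm tr_diag_mx !mulmxA.
    by rewrite hv mul0mx mxE.
  have hs : forall i, w 0 i ^+ 2 = 0.
    move: h0; rewrite mxE => h0 i.
    apply: (@psumr_eq0P R _ predT (fun i => w 0 i ^+ 2) (fun j _ => sqr_ge0 _) _ i isT).
    by rewrite -[RHS]h0; apply: eq_bigr => j _ /=; rewrite expr2 [w^T _ _]mxE.
  apply/rowP => i; rewrite [RHS]mxE; apply/eqP; rewrite -sqrf_eq0.
  by apply/eqP; apply: hs.
have hvA : v *m A = 0.
  by rewrite -(@mulmxK _ _ _ _ (@Xm_unit n x hx) (v *m A)) -[v *m A *m _]mulmxA hw mul0mx.
have hf : row_free A by rewrite /row_free hr.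
by apply/eqP; rewrite -(mulmx_free_eq0 _ hf) hvA.
Qed.

Lemma dotvE n (u w : 'cV[R]_n) : dotv u w = (u^T *m w) 0 0.
Proof. by rewrite /dotv mxE; apply: eq_bigr => i _; rewrite mxE. Qed.

Lemma key m n (A : 'M[R]_(m, n)) (c x : 'cV[R]_n) :
  \rank A = m -> (forall i, 0 < x i 0) ->
  dotv c (Xm x *m Xm x *m sv A c x) = sqnorm (Xm x *m sv A c x).
Proof.
move=> hr hx.
have hAs : A *m (Xm x *m Xm x *m sv A c x) = 0.
  rewrite /sv /yv mulmxBr mulmxBr !mulmxA.
  rewrite -[X in _ - X]mulmxA mulmxV ?mul1mx; last exact: M_unit.
  by rewrite !mulmxA subrr.
have hc : c = sv A c x + A^T *m yv A c x by rewrite /sv subrK.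
rewrite dotvE {1}hc linearD /= mulmxDl mxE trmx_mul trmxK.
rewrite -[_^T *m A *m _]mulmxA hAs mulmx0 [X in _ + X]mxE addr0 /sqnorm mxE; apply: eq_bigr => i _.
rewrite mxE !XmE -mulmxA !XmE; ring.
Qed.

Lemma gamZ n a (v : 'cV[R]_n) : 0 < a -> gam (a *: v) = a * gam v.
Proof.
move=> ha; rewrite /gam.
under eq_bigl => i do rewrite mxE pmulr_rgt0 //.
under eq_bigr => i _ do rewrite mxE.
apply: (big_rec2 (fun a1 b1 => a1 = a * b1)); first by rewrite mulr0.
by move=> i y1 y2 _ ->; rewrite maxr_pMr // ltW.
Qed.

Lemma gam_gt0 n (v : 'cV[R]_n) : (exists i, 0 < v i 0) -> 0 < gam v.
Proof.
case=> i hi; rewrite /gam (bigD1 i) //=; apply: lt_le_trans hi _.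
by rewrite le_max lexx.
Qed.

Lemma sqnormZ n a (v : 'cV[R]_n) : sqnorm (a *: v) = a ^+ 2 * sqnorm v.
Proof. by rewrite /sqnorm mulr_sumr; apply: eq_bigr => i _; rewrite mxE exprMn. Qed.

Lemma invXe n (x : 'cV[R]_n) i : (forall i, 0 < x i 0) ->
  (invmx (Xm x) *m onev R n) i 0 = (x i 0)^-1.
Proof.
move=> hx.
have h : Xm x *m (invmx (Xm x) *m onev R n) = onev R n.
  by rewrite mulmxA mulmxV ?mul1mx // Xm_unit.
have := congr1 (fun M : 'cV[R]_n => M i 0) h; rewrite /= XmE [in RHS]/onev [in RHS]mxE => e.
have hn : x i 0 != 0 by rewrite gt_eqF.
by apply: (mulfI hn); rewrite mulfV.
Qed.

Lemma scE n a (M : 'cV[R]_n) i : (a *: M) i 0 = a * M i 0.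
Proof. by rewrite mxE. Qed.

End H.

Theorem theorem1 (R : realFieldType) (m n : nat)
  (A : 'M[R]_(m, n)) (b : 'cV[R]_m) (c : 'cV[R]_n)
  (alpha beta : R) (x : nat -> 'cV[R]_n) (xs : 'cV[R]_n)
  (* standing assumptions *)
  (hrank : \rank A = m)
  (hstrict : exists z : 'cV[R]_n, A *m z = b /\ forall i, 0 < z i 0)
  (hnonconst : exists z1 z2 : 'cV[R]_n,
      A *m z1 = b /\ (forall i, 0 <= z1 i 0) /\
      A *m z2 = b /\ (forall i, 0 <= z2 i 0) /\ dotv c z1 != dotv c z2)
  (hopt : exists zo : 'cV[R]_n,
      A *m zo = b /\ (forall i, 0 <= zo i 0) /\
      forall z : 'cV[R]_n, A *m z = b -> (forall i, 0 <= z i 0) ->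
        dotv c zo <= dotv c z)
  (* parameters and initial point *)
  (halpha : 0 < alpha < 1) (hbeta : 0 <= beta < 1)
  (hx0pos : forall i, 0 < x 0%N i 0) (hx0feas : A *m x 0%N = b)
  (* GAFS recursion *)
  (hgafs : is_GAFS A c alpha beta x)
  (* well-definedness of all quantities *)
  (hxpos : forall k i, 0 < x k i 0)
  (hgam : forall k, exists i, 0 < (Xm (x k) *m sv A c (x k)) i 0)
  (hdelta : forall k, x k.+1 != x k)
  (hgk : forall k, gammak beta x k != 0)
  (* x_k -> x^* and c^T x_k > c^T x^* *)
  (hconv : forall eps : R, 0 < eps -> exists N : nat, forall k, (N <= k)%N ->
      forall i, `|x k i 0 - xs i 0| < eps)
  (habove : forall k, dotv c xs < dotv c (x k)) :
  let u := fun k => (dotv c (x k) - dotv c xs)^-1 *: (Xm (x k) *m sv A c (x k)) in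
  let r := fun k => gammak beta x k / (dotv c (x k) - dotv c xs) in
  let p := fun k => gammak beta x k *: (invmx (Xm (x k)) *m onev R n) in
  forall k : nat,
    (dotv c (x k.+1) - dotv c xs) / (dotv c (x k) - dotv c xs)
      = 1 - alpha * \sum_(j < k.+1) (sqnorm (u j) / gam (u j)) * (r k / r j)
    /\
    forall j : 'I_n,
      x k.+1 j 0 / x k j 0
        = 1 - alpha * \sum_(i < k.+1) ((u i) j 0 / gam (u i)) * ((p k) j 0 / (p i) j 0).
Proof.
move=> u r p k.
have [hx1 hxk] := hgafs.
have hG : forall k, gammak beta x k.+1 = gammak beta x k * betak beta x k.+1.
  by move=> k'; rewrite /gammak big_nat_recr.
have D : forall k, x k.+1 - x k = - \sum_(j < k.+1)
   (gammak beta x k / gammak beta x j * (alpha / gam (Xm (x j) *m sv A c (x j))))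
     *: (Xm (x j) *m Xm (x j) *m sv A c (x j)).
  elim=> [|k' IH].
    by rewrite big_ord1 /= divff ?mul1r ?hgk // hx1 addrAC subrr add0r.
  rewrite hxk.
  rewrite (_ : beta / ninf (invmx (Xm (x k'.+1)) *m (x k'.+1 - x k')) = betak beta x k'.+1) //.
  rewrite IH [in RHS]big_ord_recr /= divff ?mul1r ?hgk //.
  rewrite scalerN scaler_sumr.
  rewrite (eq_bigr (fun i : 'I_k'.+1 => (gammak beta x k'.+1 / gammak beta x i
      * (alpha / gam (Xm (x i) *m sv A c (x i)))) *: (Xm (x i) *m Xm (x i) *m sv A c (x i)))); last first.
    move=> i _; rewrite scalerA hG; congr (_ *: _).
    have := hgk i; set a1 := gammak beta x i; set a2 := gammak beta x k'; move=> h1.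
    ring.
  move: (\sum_(i < k'.+1) _) => S.
  move: (_ *: (Xm (x k'.+1) *m Xm (x k'.+1) *m sv A c (x k'.+1))) => T.
  move: (x k'.+1) => X1.
  by rewrite opprD addrAC [X1 - T - X1]addrAC subrr add0r addrC.
have hf : forall j, 0 < dotv c (x j) - dotv c xs by move=> j; rewrite subr_gt0.
have hg : forall j, 0 < gam (Xm (x j) *m sv A c (x j)) by move=> j; apply: gam_gt0.
have E : forall i, x k.+1 i 0 = x k i 0 - \sum_(j < k.+1)
   (gammak beta x k / gammak beta x j * (alpha / gam (Xm (x j) *m sv A c (x j))))
     * (x j i 0 * (Xm (x j) *m sv A c (x j)) i 0).
  move=> i; have := congr1 (fun M : 'cV[R]_n => M i 0) (D k).
  rewrite /= !mxE summxE => e; rewrite -[LHS](subrK (x k i 0)) e addrC; congr (_ - _).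
  by apply: eq_bigr => j _; rewrite mxE -mulmxA XmE.
have hdot : dotv c (x k.+1) = dotv c (x k) - \sum_(j < k.+1)
   (gammak beta x k / gammak beta x j * (alpha / gam (Xm (x j) *m sv A c (x j))))
     * sqnorm (Xm (x j) *m sv A c (x j)).
  rewrite {1}/dotv; under eq_bigr => i _ do rewrite E mulrBr mulr_sumr.
  rewrite sumrB exchange_big /=; congr (_ - _); apply: eq_bigr => j _.
  rewrite -key // /dotv mulr_sumr; apply: eq_bigr => i _.
  rewrite -mulmxA !XmE; ring.
split.
  rewrite hdot /u /r [in RHS]mulr_sumr.
  have hfk := hf k; have hfk0 : dotv c (x k) - dotv c xs != 0 by rewrite gt_eqF.
  rewrite [in RHS](eq_bigr (fun j : 'I_k.+1 => (gammak beta x k / gammak beta x j * (alpha / gam (Xm (x j) *m sv A c (x j))))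
     * sqnorm (Xm (x j) *m sv A c (x j)) / (dotv c (x k) - dotv c xs))); last first.
    move=> j _ /=; rewrite sqnormZ gamZ ?invr_gt0 //.
    have h1 := hgk j; have h2 := hgk k; have h3 := hf j; have h4 := hg j.
    have h3' : dotv c (x j) - dotv c xs != 0 by rewrite gt_eqF.
    have h4' : gam (Xm (x j) *m sv A c (x j)) != 0 by rewrite gt_eqF.
    move: h1 h2 h3' h4'.
    move: (gammak beta x j) (gammak beta x k) (dotv c (x j) - dotv c xs)
      (gam (Xm (x j) *m sv A c (x j))) (sqnorm (Xm (x j) *m sv A c (x j))) => a1 b1 d1 e1 q1 ha hb hd he.
    by field; rewrite hfk0 he ha hd.
  rewrite -mulr_suml.
  move: (\sum_(i < k.+1) _) => S; move: hfk0.
  move: (dotv c (x k)) (dotv c xs) => a1 b1 hab.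
  by field.
move=> j; rewrite E [in RHS]mulr_sumr.
have hxkj := hxpos k j; have hxk0 : x k j 0 != 0 by rewrite gt_eqF.
rewrite [in RHS](eq_bigr (fun i : 'I_k.+1 => (gammak beta x k / gammak beta x i * (alpha / gam (Xm (x i) *m sv A c (x i))))
     * (x i j 0 * (Xm (x i) *m sv A c (x i)) j 0) / x k j 0)); last first.
  move=> i _ /=; rewrite /u /p /= gamZ ?invr_gt0 // !scE !invXe //.
  have h1 := hgk i; have h2 := hgk k; have h3 := hf i; have h4 := hg i.
  have h3' : dotv c (x i) - dotv c xs != 0 by rewrite gt_eqF.
  have h4' : gam (Xm (x i) *m sv A c (x i)) != 0 by rewrite gt_eqF.
  have h5 : x i j 0 != 0 by rewrite gt_eqF.
  move: h1 h2 h3' h4' h5.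
  move: (gammak beta x i) (gammak beta x k) (dotv c (x i) - dotv c xs)
    (gam (Xm (x i) *m sv A c (x i))) ((Xm (x i) *m sv A c (x i)) j 0) (x i j 0) => a1 b1 d1 e1 q1 y1 ha hb hd he hy.
  by field; rewrite hxk0 he ha hy hd.
rewrite -mulr_suml.
move: (\sum_(i < k.+1) _) => S; move: hxk0.
move: (x k j 0) => a1 ha.
by field.
Qed.
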